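(* For integers $i,j\geq 0$ and $t\geq 1$ let $h_{i,j}(t)$ be the number of proper hyperbinary expansions $(\varepsilon_{\nu-1},\ldots,\varepsilon_0)$ of $t-1$ such that $|\{0\leq \ell<\nu:\varepsilon_\ell=2\}|=i$ and $|\{0\leq \ell<\nu:\varepsilon_\ell=0\}|=j$. Then for all $k\in\mathbb{Z}$ and $t\ge1$, \[ \varphi(k,t)=\sum_{\substack{i,j\geq 0\\i-j=k}}2^{-(i+j)}h_{i,j}(t). \]
   Context: A hyperbinary expansion of a nonnegative integer $n$ is a sequence $(\varepsilon_{\nu-1},\ldots,\varepsilon_0)\in \{0,1,2\}^{\nu}$ ($\nu\ge0$) with $\sum_{0\leq i<\nu}\varepsilon_i2^i=n$; it is proper if either $\nu=0$, or $\nu>0$ and $\varepsilon_{\nu-1}\neq 0$. Define numbers $\varphi(k,t)$ for $k\in\mathbb{Z}$ and integers $t\ge1$ by $\varphi(0,1)=1$, $\varphi(k,1)=0$ for $k\neq0$, and for $t\ge1$: $\varphi(k,2t)=\varphi(k,t)$, $\varphi(k,2t+1)=\frac12\varphi(k-1,t)+\frac12\varphi(k+1,t+1)$. *)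

(* Defs.v *)
From mathcomp Require Import all_boot all_order all_algebra.
Set Implicit Arguments. Unset Strict Implicit. Unset Printing Implicit Defensive.
Import Order.TTheory GRing.Theory Num.Theory.
Local Open Scope ring_scope.

Fixpoint phi_fuel (fuel : nat) (k : int) (t : nat) : rat :=
  match fuel with
  | 0%N => 0
  | fuel'.+1 =>
    if (t <= 1)%N then (if k == 0 then 1 else 0)
    else if ~~ odd t then phi_fuel fuel' k t./2
    else (1/2) * phi_fuel fuel' (k - 1) t./2 + (1/2) * phi_fuel fuel' (k + 1) t./2.+1
  end.

Definition phi (k : int) (t : nat) : rat := phi_fuel t k t.

(* A hyperbinary expansion (eps_{nu-1},...,eps_0) is represented by the list
   [:: eps_0; eps_1; ...; eps_{nu-1}] (least significant digit first). *)
Definition hb_value (s : seq nat) : nat := \sum_(l < size s) nth 0%N s l * 2 ^ l.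

Definition is_hyperbinary (n : nat) (s : seq nat) : bool :=
  all (fun e => e <= 2)%N s && (hb_value s == n).

Definition is_proper (s : seq nat) : bool :=
  (size s == 0)%N || (last 0%N s != 0%N).

Fixpoint digit_seqs (nu : nat) : seq (seq nat) :=
  match nu with
  | 0%N => [:: [::]]
  | nu'.+1 => [seq e :: s | e <- iota 0 3, s <- digit_seqs nu']
  end.

(* Every proper hyperbinary expansion of t-1 has length nu <= t (since
   2^(nu-1) <= value), so enumerating lengths 0..t is exhaustive. *)
Definition h (i j t : nat) : nat :=
  \sum_(nu < t.+1)
    count (fun s => [&& is_hyperbinary t.-1 s, is_proper s,
                       count_mem 2%N s == i & count_mem 0%N s == j])
          (digit_seqs nu).

(* Main.v *)
Require Import Defs.
From mathcomp Require Import all_boot all_order all_algebra zify.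
Import Order.TTheory GRing.Theory Num.Theory.
Local Open Scope ring_scope.
Lemma ds_S nu : digit_seqs nu.+1 = [seq 0%N :: s | s <- digit_seqs nu] ++ [seq 1%N :: s | s <- digit_seqs nu] ++ [seq 2%N :: s | s <- digit_seqs nu].
Proof. by rewrite /= cats0. Qed.
Lemma hb_nil : hb_value [::] = 0%N. Proof. by rewrite /hb_value big_ord0. Qed.
Lemma hb_cons e r : hb_value (e :: r) = (e + 2 * hb_value r)%N.
Proof. rewrite /hb_value /= big_ord_recl /= muln1; congr (_ + _)%N.
rewrite big_distrr /=; apply: eq_bigr => i _.
by rewrite add0n /bump /= add1n expnS mulnCA.
Qed.
Lemma hb_pos r : r != [::] -> last 0%N r != 0%N -> (0 < hb_value r)%N.
Proof.
elim: r => [//|e r IH] _ /=; rewrite hb_cons.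
case: r IH => [|a r] IH /=; first by rewrite hb_nil; case: e.
move=> H; move: (IH isT H) => /=; set x := hb_value _; lia.
Qed.
Definition dif (s : seq nat) : int := (count_mem 2%N s)%:Z - (count_mem 0%N s)%:Z.
Definition wt (s : seq nat) : rat := 2 ^- (count_mem 2%N s + count_mem 0%N s).
Definition val n k s : rat :=
  if [&& is_hyperbinary n s, is_proper s & dif s == k] then wt s else 0.

Lemma dif0 r : dif (0%N :: r) = dif r - 1.
Proof. rewrite /dif /= add0n; lia. Qed.
Lemma dif1 r : dif (1%N :: r) = dif r.
Proof. by rewrite /dif /= !add0n. Qed.
Lemma dif2 r : dif (2%N :: r) = dif r + 1.
Proof. rewrite /dif /= add0n; lia. Qed.
Lemma wt1 r : wt (1%N :: r) = wt r.
Proof. by rewrite /wt /= !add0n. Qed.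
Lemma wt0 r : wt (0%N :: r) = 1/2 * wt r.
Proof. rewrite /wt /= add0n addnA addn1 exprS invfM mul1r. done. Qed.
Lemma wt2 r : wt (2%N :: r) = 1/2 * wt r.
Proof. rewrite /wt /= add0n add1n exprS invfM mul1r. done. Qed.
Lemma hyp_cons n e r : is_hyperbinary n (e :: r) = [&& (e <= 2)%N, all (fun e => e <= 2)%N r & (e + 2 * hb_value r == n)%N].
Proof. by rewrite /is_hyperbinary /= hb_cons andbA. Qed.
Lemma prop_cons e r : is_proper (e :: r) = if r is [::] then e != 0%N else is_proper r.
Proof. by case: r. Qed.

Lemma val_1_odd m k r : val (2 * m+1) k (1%N :: r) = val m k r.
Proof.
rewrite /val hyp_cons prop_cons dif1 wt1 /=.
have -> : (1 + 2 * hb_value r == 2 * m+1)%N = (hb_value r == m) by apply/eqP/eqP; lia.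
by case: r.
Qed.
Lemma val_1_even m k r : val (2 * m) k (1%N :: r) = 0.
Proof.
rewrite /val hyp_cons /=.
have -> : (1 + 2 * hb_value r == 2 * m)%N = false by apply/eqP; lia.
by rewrite andbF.
Qed.
Lemma val_0_odd m k r : val (2 * m+1) k (0%N :: r) = 0.
Proof.
rewrite /val hyp_cons /=.
have -> : (0 + 2 * hb_value r == 2 * m+1)%N = false by apply/eqP; lia.
by rewrite andbF.
Qed.
Lemma val_2_odd m k r : val (2 * m+1) k (2%N :: r) = 0.
Proof.
rewrite /val hyp_cons /=.
have -> : (2 + 2 * hb_value r == 2 * m+1)%N = false by apply/eqP; lia.
by rewrite andbF.
Qed.
Lemma val_2_zero k r : val 0 k (2%N :: r) = 0.
Proof.
rewrite /val hyp_cons /=.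
have -> : (2 + 2 * hb_value r == 0)%N = false by apply/eqP; lia.
by rewrite andbF.
Qed.
Lemma val_0_zero k r : val 0 k (0%N :: r) = 0.
Proof.
rewrite /val hyp_cons prop_cons /=.
case: r => [|a r] /=; first by rewrite andbF.
have -> : (0 + 2 * hb_value (a :: r) == 0)%N = (hb_value (a::r) == 0)%N by apply/eqP/eqP; lia.
case: eqP => //= H.
have : is_proper (a :: r) -> False.
  by rewrite /is_proper /= => Hp; have := @hb_pos (a::r) isT Hp; rewrite H.
move=> Hn; case Hp: (is_proper (a :: r)); last by rewrite andbF. by case: (Hn Hp). by rewrite andbF.
Qed.
Lemma val_0_even m k r : val (2 * m.+1) k (0%N :: r) = 1/2 * val m.+1 (k+1) r.
Proof.
rewrite /val hyp_cons prop_cons dif0 wt0 /=.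
have -> : (0 + 2 * hb_value r == 2 * m.+1)%N = (hb_value r == m.+1) by apply/eqP/eqP; lia.
have -> : (dif r - 1 == k) = (dif r == k + 1) by apply/eqP/eqP; lia.
rewrite /is_hyperbinary; case: r => [|a r] /=; rewrite ?hb_nil ?andbF ?mulr0 //.
by case: ifP; rewrite ?mulr0.
Qed.
Lemma val_2_even m k r : val (2 * m.+1) k (2%N :: r) = 1/2 * val m (k-1) r.
Proof.
rewrite /val hyp_cons prop_cons dif2 wt2 /=.
have -> : (2 + 2 * hb_value r == 2 * m.+1)%N = (hb_value r == m) by apply/eqP/eqP; lia.
have -> : (dif r + 1 == k) = (dif r == k - 1) by apply/eqP/eqP; lia.
rewrite /is_hyperbinary; case: r => [|a r] /=; rewrite ?hb_nil ?andbF ?mulr0 //;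
by case: ifP; rewrite ?mulr0.
Qed.
Lemma sum0 {s : seq (seq nat)} {f : seq nat -> rat} : (forall r, f r = 0) -> \sum_(r <- s) f r = 0.
Proof. by move=> H; rewrite big1. Qed.
Lemma sumeq {s : seq (seq nat)} (f g : seq nat -> rat) : (forall r, f r = g r) -> \sum_(r <- s) f r = \sum_(r <- s) g r.
Proof. by move=> H; apply: eq_bigr. Qed.
Definition A k n nu := \sum_(s <- digit_seqs nu) val n k s.
Lemma A_S k n nu : A k n nu.+1 = \sum_(r <- digit_seqs nu) val n k (0%N :: r)
  + (\sum_(r <- digit_seqs nu) val n k (1%N :: r) + \sum_(r <- digit_seqs nu) val n k (2%N :: r)).
Proof. by rewrite /A ds_S !big_cat !big_map. Qed.
Lemma A0 k n : A k n 0 = if (n == 0)%N && (k == 0) then 1 else 0.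
Proof.
rewrite /A /= big_seq1 /val /is_hyperbinary /is_proper hb_nil /dif /wt /=.
by case: n => [|n] //=; rewrite eq_sym expr0 invr1.
Qed.
Lemma A_odd k m nu : A k (2 * m + 1) nu.+1 = A k m nu.
Proof.
rewrite A_S (sumeq _ _ (val_1_odd m k)).
rewrite (sum0 (val_0_odd m k)) (sum0 (val_2_odd m k)).
by rewrite add0r addr0.
Qed.
Lemma A_even k m nu : A k (2 * m.+1) nu.+1 = 1/2 * A (k+1) m.+1 nu + 1/2 * A (k-1) m nu.
Proof.
rewrite A_S (sumeq _ _ (val_0_even m k)) (sumeq _ _ (val_2_even m k)).
rewrite (sum0 (val_1_even m.+1 k)) add0r.
by rewrite /A -!big_distrr.
Qed.
Lemma A_zero k nu : A k 0 nu.+1 = 0.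
Proof.
rewrite A_S (sum0 (val_0_zero k)) (sum0 (val_2_zero k)).
by rewrite (sum0 (val_1_even 0 k)) !addr0.
Qed.
Definition Q k n L := \sum_(nu < L) A k n nu.
Lemma mainlem fuel : forall k t L, (1 <= t)%N -> (t <= fuel)%N -> (t <= L)%N ->
  phi_fuel fuel k t = Q k t.-1 L.
Proof.
elim: fuel => [|fuel IH] k t L Ht Hf HL; first lia.
case: L HL => [|L] HL; first lia.
rewrite /Q big_ord_recl /= A0.
case: (leqP t 1) => Ht1.
  have -> : t = 1%N by lia.
  rewrite /= big1 ?addr0; first by case: (k == 0).
  by move=> i _; exact: A_zero.
have -> : (t.-1 == 0)%N = false by apply/eqP; lia.
rewrite add0r.
have := odd_double_half t; rewrite -muln2.
case: (boolP (odd t)) => Hodd /= Ht2.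
  have -> : t.-1 = (2 * (t./2.-1).+1)%N by lia.
  rewrite (eq_bigr (fun i : 'I_L => 1/2 * A (k+1) (t./2.-1).+1 i + 1/2 * A (k-1) (t./2.-1) i)); last by move=> i _; exact: A_even.
  rewrite big_split /= -!big_distrr /=.
  rewrite (IH (k-1) t./2 L) ?(IH (k+1) t./2.+1 L); try lia.
  have E : t./2.-1.+1 = t./2 by lia.
  by rewrite /Q addrC E.
have -> : t.-1 = (2 * (t./2.-1) + 1)%N by lia.
rewrite (eq_bigr (fun i : 'I_L => A k t./2.-1 i)); last by move=> i _; rewrite /bump leq0n add1n; exact: A_odd.
rewrite (IH k t./2 L) //; lia.
Qed.
Lemma count_sum (T : Type) (a : pred T) (r : seq T) : count a r = (\sum_(x <- r) (a x : nat))%N.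
Proof. by elim: r => [|x r IH]; rewrite ?big_nil ?big_cons //= IH. Qed.

Lemma size_ds nu s : s \in digit_seqs nu -> size s = nu.
Proof.
elim: nu s => [|nu IH] s /=; first by rewrite inE => /eqP ->.
rewrite cats0 !mem_cat => /orP [/mapP [r Hr ->]|/orP [] /mapP [r Hr ->]] /=; by rewrite IH.
Qed.

Lemma pt N n k s : (count_mem 2%N s < N)%N -> (count_mem 0%N s < N)%N ->
 val n k s = \sum_(i < N) \sum_(j < N) (if (i%:Z - j%:Z == k) then
   2 ^- (i + j)%N * ([&& is_hyperbinary n s, is_proper s, count_mem 2%N s == i & count_mem 0%N s == j] : nat)%:R else 0).
Proof.
move=> H2 H0.
rewrite (bigD1 (Ordinal H2)) //= [X in _ = _ + X]big1 ?addr0; last first.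
  move=> i Hi; apply: big1 => j _.
  have -> : (count_mem 2%N s == i) = false.
    apply/negbTE; apply: contra Hi => /eqP E; apply/eqP/val_inj; by rewrite /= E.
  by rewrite andFb !andbF mulr0; case: ifP.
rewrite (bigD1 (Ordinal H0)) //= [X in _ = _ + X]big1 ?addr0; last first.
  move=> j Hj.
  have -> : (count_mem 0%N s == j) = false.
    apply/negbTE; apply: contra Hj => /eqP E; apply/eqP/val_inj; by rewrite /= E.
  by rewrite !andbF mulr0; case: ifP.
rewrite !eqxx !andbT /val /dif /wt.
by case: (is_hyperbinary n s); case: (is_proper s); case: (_ == k); rewrite /= ?mulr1 ?mulr0.
Qed.
Definition G k t (i j : nat) (s : seq nat) : rat := if (i%:Z - j%:Z == k) then 2 ^- (i + j)%N * ([&& is_hyperbinary t.-1 s, is_proper s, count_mem 2%N s == i & count_mem 0%N s == j] : nat)%:R else 0.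

Theorem proposition3p3 (k : int) (t N : nat) :
  (1 <= t)%N -> (t < N)%N ->
  phi k t =
    \sum_(i < N) \sum_(j < N | (i%:Z - j%:Z == k))
      ((2 ^- (i + j)%N) * (h i j t)%:R : rat).
Proof.
move=> Ht HN.
rewrite /phi (@mainlem t k t t.+1) // /Q /A.
transitivity (\sum_(i < N) \sum_(j < N) \sum_(nu < t.+1) \sum_(s <- digit_seqs nu) G k t i j s).
  rewrite (eq_bigr (fun nu : 'I_t.+1 => \sum_(s <- digit_seqs nu) \sum_(i < N) \sum_(j < N) G k t i j s)); last first.
    move=> nu _; rewrite big_seq [RHS]big_seq; apply: eq_bigr => s Hs; apply: pt.
      by have := count_size (pred1 2%N) s; rewrite (@size_ds _ _ Hs); have := ltn_ord nu; lia.
    by have := count_size (pred1 0%N) s; rewrite (@size_ds _ _ Hs); have := ltn_ord nu; lia.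
  rewrite (eq_bigr (fun nu : 'I_t.+1 => \sum_(i < N) \sum_(s <- digit_seqs nu) \sum_(j < N) G k t i j s)); last by move=> nu _; rewrite exchange_big.
  rewrite (eq_bigr (fun nu : 'I_t.+1 => \sum_(i < N) \sum_(j < N) \sum_(s <- digit_seqs nu) G k t i j s)); last by move=> nu _; apply: eq_bigr => i _; rewrite exchange_big.
  rewrite exchange_big; apply: eq_bigr => i _; by rewrite exchange_big.
apply: eq_bigr => i _; rewrite [RHS]big_mkcond; apply: eq_bigr => j _.
rewrite /G /h; case: ifP => _; last by rewrite big1 // => nu _; rewrite big1.
rewrite natr_sum big_distrr; apply: eq_bigr => nu _.
by rewrite count_sum natr_sum big_distrr.
Qed.
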